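(* Let $m\ge 2$, $d_1,\dots,d_m\ge 2$, and let $\rho$ be a density matrix on $\mathbb{C}^{d_1}\otimes\cdots\otimes\mathbb{C}^{d_m}$. For each $i=1,\dots,m$ let $\mathcal{P}^{(i)}=\{P^{(i)}_j\}_{j=1}^{d_i^2}$ be a general SIC-POVM on $\mathbb{C}^{d_i}$ with parameter $a_i$. Let $d=\min\{d_1^2,\dots,d_m^2\}$ and define $$J(\rho)=\max_{\sigma_1,\dots,\sigma_m}\sum_{j=1}^{d}\mathrm{Tr}\Big[\Big(\bigotimes_{i=1}^m P^{(i)}_{\sigma_i(j)}\Big)\rho\Big],$$ where the maximum runs over all tuples of injective maps $\sigma_i:\{1,\dots,d\}\to\{1,\dots,d_i^2\}$, $i=1,\dots,m$. If $\rho$ is fully separable, then $$J(\rho)\le \min_{1\le i\neq k\le m}\sqrt{\frac{a_id_i^2+1}{d_i(d_i+1)}}\,\sqrt{\frac{a_kd_k^2+1}{d_k(d_k+1)}}.$$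
   Context: A general SIC-POVM on $\mathbb{C}^{n}$ with parameter $a$ is a set of $n^2$ positive semidefinite operators $\{P_\alpha\}_{\alpha=1}^{n^2}$ on $\mathbb{C}^{n}$ such that $\sum_{\alpha=1}^{n^2}P_\alpha=I$, $\mathrm{Tr}(P_\alpha^2)=a$ for all $\alpha$, and $\mathrm{Tr}(P_\alpha P_\beta)=\frac{1-na}{n(n^2-1)}$ for all $\alpha\neq\beta$; here $\frac{1}{n^3}<a\le\frac{1}{n^2}$. A density matrix on $\mathbb{C}^{d_1}\otimes\cdots\otimes\mathbb{C}^{d_m}$ is fully separable if it is a convex combination of product states $\rho_1\otimes\cdots\otimes\rho_m$. *)

(* Defs.v *)
(* Complex numbers: an arbitrary numClosedFieldType C
   (e.g. algC, or the complex numbers). *)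
From HB Require Import structures.
From mathcomp Require Import all_boot all_order all_algebra.
Set Implicit Arguments. Unset Strict Implicit. Unset Printing Implicit Defensive.
Import Order.TTheory GRing.Theory Num.Theory.
Local Open Scope ring_scope.

Section Defs.
Variable C : numClosedFieldType.

Definition adjmx m n (A : 'M[C]_(m, n)) : 'M[C]_(n, m) := (map_mx Num.conj A)^T.

Definition psdmx n (A : 'M[C]_n) : Prop :=
  adjmx A = A /\ forall v : 'rV[C]_n, 0 <= (v *m A *m adjmx v) 0 0.

Definition density n (A : 'M[C]_n) : Prop := psdmx A /\ \tr A = 1.

Definition gen_SIC_POVM n (P : 'I_(n ^ 2) -> 'M[C]_n) (a : C) : Prop :=
  [/\ (forall j, psdmx (P j)),
      \sum_j P j = 1%:M,
      (forall j, \tr (P j *m P j) = a),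
      (forall j k, j != k ->
         \tr (P j *m P k) = (1 - n%:R * a) / (n%:R * (n%:R ^+ 2 - 1))) &
      1 / n%:R ^+ 3 < a <= 1 / n%:R ^+ 2].

(* The computational basis of C^{d_1} (x) ... (x) C^{d_m} is indexed by the
   finite type of tuples (x_i)_i with x_i < d i; we fix the ordering given by
   enum_val, so operators on the tensor product are 'M[C]_#|tidx d|. *)
Definition tidx (m : nat) (d : 'I_m -> nat) : finType :=
  {dffun forall i : 'I_m, 'I_(d i)}.

Definition tensmx (m : nat) (d : 'I_m -> nat) (A : forall i, 'M[C]_(d i))
  : 'M[C]_#|tidx d| :=
  \matrix_(x, y) \prod_(i < m)
     A i (@enum_val (tidx d) (mem predT) x i) (@enum_val (tidx d) (mem predT) y i).

Definition fully_separable (m : nat) (d : 'I_m -> nat) (rho : 'M[C]_#|tidx d|)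
  : Prop :=
  exists (K : nat) (w : 'I_K -> C) (s : 'I_K -> forall i : 'I_m, 'M[C]_(d i)),
    [/\ forall k, 0 <= w k,
        \sum_k w k = 1,
        forall k i, density (s k i) &
        rho = \sum_k w k *: tensmx (s k)].

End Defs.

(* d = min_i d_i^2 (for m >= 1; the neutral element is an upper bound of
   all the terms, so it is never the result) *)
Definition dmin (m : nat) (d : 'I_m -> nat) : nat :=
  \big[minn/ (\sum_(i < m) d i ^ 2)%N]_(i < m) (d i ^ 2)%N.

(* Main.v *)
Require Import Defs.
From HB Require Import structures.
From mathcomp Require Import all_boot all_order all_algebra.
From mathcomp Require Import ring zify.
Import Order.TTheory GRing.Theory Num.Theory.
Local Open Scope ring_scope.

Lemma prod_sum_dffun (R : comPzRingType) (I : finType) (T_ : I -> finType)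
  (F : forall i, T_ i -> R) :
  \prod_i \sum_(t : T_ i) F i t = \sum_(x : {dffun forall i, T_ i}) \prod_i F i (x i).
Proof.
pose P_ := fun i => [ffun t : T_ i => F i t].
transitivity (\prod_i \sum_(t : T_ i) P_ i t).
  by apply: eq_bigr => i _; apply: eq_bigr => t _; rewrite ffunE.
under eq_bigr do rewrite (big_tag (fun i t => P_ i t)).
rewrite bigA_distr_big_dep -big_fprod.
rewrite (reindex (@fprod_of_dffun I T_)); last first.
  by exists (@dffun_of_fprod I T_) => x _; [rewrite fprod_of_dffunK | rewrite dffun_of_fprodK].
apply: eq_bigr => x _; apply: eq_bigr => i _.
by rewrite /fprod_of_dffun fprodE ffunE.
Qed.

Lemma tens_tr (C : numClosedFieldType) m (d : 'I_m -> nat) (A B : forall i, 'M[C]_(d i)) :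
  \tr (tensmx A *m tensmx B) = \prod_i \tr (A i *m B i).
Proof.
transitivity (\sum_(x : 'I_#|tidx d|) \sum_(j < #|tidx d|) \prod_(i < m)
      (A i (enum_val x i) (enum_val j i) * B i (enum_val j i) (enum_val x i))).
  rewrite /mxtrace; apply: eq_bigr => x _; rewrite mxE; apply: eq_bigr => j _.
  by rewrite !mxE big_split.
rewrite -(big_enum_val (A := mem predT)
   (fun x : tidx d => \sum_(j < #|tidx d|) \prod_(i < m)
      (A i (x i) (enum_val j i) * B i (enum_val j i) (x i)))) /=.
under eq_bigr do rewrite -(big_enum_val (A := mem predT)
   (fun y : tidx d => \prod_(i < m) (A i (_ i) (y i) * B i (y i) (_ i)))) /=.
transitivity (\prod_i \sum_(s : 'I_(d i)) \sum_(t : 'I_(d i)) A i s t * B i t s).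
  rewrite prod_sum_dffun; apply: eq_bigr => x _.
  rewrite prod_sum_dffun; apply: eq_bigr => y _ //.
by apply: eq_bigr => i _; rewrite /mxtrace; apply: eq_bigr => s _; rewrite mxE.
Qed.

Section Single.
Variables (C : numClosedFieldType) (n : nat).
Implicit Types (A B M : 'M[C]_n).

Lemma herm_entry M : adjmx M = M -> forall i j, (M i j)^* = M j i.
Proof. by move=> H i j; rewrite -{2}H !mxE. Qed.

Arguments herm_entry {M}.
Lemma tr_mulE A B : \tr (A *m B) = \sum_i \sum_j A i j * B j i.
Proof. by apply: eq_bigr => i _; rewrite mxE. Qed.

Lemma tr_herm_real A B : adjmx A = A -> adjmx B = B -> \tr (A *m B) \is Num.real.
Proof.
move=> HA HB; apply/CrealP; rewrite !tr_mulE rmorph_sum /=.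
rewrite exchange_big /=; apply: eq_bigr => i _; rewrite rmorph_sum /=.
apply: eq_bigr => j _; rewrite rmorphM /= !herm_entry // mulrC.
Qed.

Lemma tr_sq_ge0 M : adjmx M = M -> 0 <= \tr (M *m M).
Proof.
move=> HM; rewrite tr_mulE; apply: sumr_ge0 => i _; apply: sumr_ge0 => j _.
by rewrite -(herm_entry HM i j) mul_conjC_ge0.
Qed.

Lemma quadE A (v : 'rV[C]_n) :
  (v *m A *m adjmx v) 0 0 = \sum_q (\sum_p v 0 p * A p q) * (v 0 q)^*.
Proof.
rewrite mxE; apply: eq_bigr => q _; rewrite !mxE. by [].
Qed.

Lemma sum_two (i j : 'I_n) (x y : C) (f : 'I_n -> C) : i != j ->
  \sum_p (if p == i then x else if p == j then y else 0) * f p = x * f i + y * f j.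
Proof.
move=> ij; have ji : (j == i) = false by rewrite eq_sym (negbTE ij).
rewrite (bigD1 i) //= eqxx (bigD1 j) /=; last by rewrite ji.
rewrite ji eqxx addrA [X in _ + _ + X]big1 ?addr0 // => p /andP[pi pj].
by rewrite (negbTE pi) (negbTE pj) mul0r.
Qed.

Lemma psd_quad A (i j : 'I_n) (x y : C) : psdmx A -> i != j ->
  0 <= x * x^* * A i i + x * A i j * y^* + y * A j i * x^* + y * y^* * A j j.
Proof.
move=> [_ HA] ij.
pose v : 'rV[C]_n := \row_p (if p == i then x else if p == j then y else 0).
have := HA v; rewrite quadE.
have E : forall q, \sum_p v 0 p * A p q = x * A i q + y * A j q.
  by move=> q; rewrite -(@sum_two i j x y (fun p => A p q) ij); apply: eq_bigr => p _; rewrite mxE.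
under eq_bigr do rewrite E.
have -> : \sum_q (x * A i q + y * A j q) * (v 0 q)^* =
          \sum_q (if q == i then x^* else if q == j then y^* else 0) * (x * A i q + y * A j q).
  apply: eq_bigr => q _; rewrite mxE mulrC; congr (_ * _).
  by case: eqP => // _; case: eqP => // _; rewrite conjC0.
rewrite sum_two //.
suff -> : x^* * (x * A i i + y * A j i) + y^* * (x * A i j + y * A j j) =
  x * x^* * A i i + x * A i j * y^* + y * A j i * x^* + y * y^* * A j j by [].
ring.
Qed.

Lemma psd_diag A i : psdmx A -> 0 <= A i i.
Proof.
move=> [_ HA]; have := HA (delta_mx 0 i); rewrite quadE.
have E : forall q, \sum_p (delta_mx 0 i : 'rV[C]_n) 0 p * A p q = A i q.
  move=> q; rewrite (bigD1 i) //= big1 => [|p pi]; last by rewrite !mxE (negbTE pi) andbF mul0r.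
  by rewrite !mxE !eqxx /= mul1r addr0.
under eq_bigr do rewrite E.
rewrite (bigD1 i) //= big1 => [|q qi]; last by rewrite !mxE (negbTE qi) andbF conjC0 mulr0.
by rewrite !mxE !eqxx /= conjC1 mulr1 addr0.
Qed.

Lemma psd_minor A (i j : 'I_n) : psdmx A -> `|A i j| ^+ 2 <= A i i * A j j.
Proof.
move=> HA; have [-> | ij] := eqVneq i j.
  by have h := psd_diag A j HA; rewrite ger0_norm // expr2.
have ji : j != i by rewrite eq_sym.
have Hh : adjmx A = A by case: HA.
have Aji : A j i = (A i j)^* by rewrite herm_entry.
have Aii := psd_diag A i HA; have Ajj := psd_diag A j HA.
have cii := geC0_conj Aii; have cjj := geC0_conj Ajj.
have q1 := psd_quad A i j (A j j) (- A i j) HA ij.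
have q2 := psd_quad A j i (A i i) (- (A i j)^*) HA ji.
have q3 := psd_quad A i j 1 (- A i j) HA ij.
rewrite Aji in q1 q2 q3.
set r := A i j in q1 q2 q3 *.
have nr : `|r| ^+ 2 = r * r^* by rewrite normCK.
rewrite !rmorphN /= conjCK cii cjj conjC1 in q1 q2 q3.
have e1 : A j j * A j j * A i i + A j j * r * - r^* + - r * r^* * A j j + - r * - r^* * A j j
   = A j j * (A i i * A j j - `|r| ^+ 2) by rewrite nr; ring.
have e2 : A i i * A i i * A j j + A i i * r^* * - r + - r^* * r * A i i + - r^* * - r * A i i
   = A i i * (A i i * A j j - `|r| ^+ 2) by rewrite nr; ring.
have e3 : 1 * 1 * A i i + 1 * r * - r^* + - r * r^* * 1 + - r * - r^* * A j j
   = A i i + `|r| ^+ 2 * (A j j - 2) by rewrite nr; ring.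
rewrite e1 in q1; rewrite e2 in q2; rewrite e3 in q3.
rewrite -subr_ge0.
have [jpos | ] := boolP (0 < A j j); first by rewrite -(pmulr_rge0 _ jpos).
rewrite lt_def Ajj andbT negbK => /eqP j0.
have [ipos | ] := boolP (0 < A i i); first by rewrite -(pmulr_rge0 _ ipos).
rewrite lt_def Aii andbT negbK => /eqP i0.
rewrite j0 i0 add0r sub0r mulrN in q3.
rewrite i0 mul0r sub0r oppr_ge0.
by move: q3; rewrite oppr_ge0 mulrC pmulr_rle0 // ltr0n.
Qed.
Lemma tr_sq_le1 A : density A -> \tr (A *m A) <= 1.
Proof.
move=> [HA trA]; have Hh : adjmx A = A by case: HA.
rewrite tr_mulE -trA -[X in _ <= X]mul1r -{1}trA /mxtrace mulr_suml.
apply: ler_sum => i _; rewrite mulr_sumr; apply: ler_sum => j _.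
rewrite -(herm_entry Hh i j) -normCK mulrC [A j j * _]mulrC; exact: psd_minor.
Qed.

Lemma adjmx_comb A (Q : 'I_(n ^ 2) -> 'M[C]_n) (c : 'I_(n ^ 2) -> C) :
  adjmx A = A -> (forall u, adjmx (Q u) = Q u) -> (forall u, c u \is Num.real) ->
  adjmx (A - \sum_u c u *: Q u) = A - \sum_u c u *: Q u.
Proof.
move=> HA HQ Hc; apply/matrixP => i j; rewrite !mxE rmorphB /= herm_entry //.
rewrite !summxE rmorph_sum /=; congr (_ - _); apply: eq_bigr => u _.
by rewrite !mxE rmorphM /= conj_Creal // herm_entry.
Qed.
Ltac sidec := repeat (apply/andP; split); try assumption.

Lemma sic_bound (P : 'I_(n ^ 2) -> 'M[C]_n) (a : C) (S : 'M[C]_n) :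
  (2 <= n)%N -> gen_SIC_POVM P a -> density S ->
  \sum_t `|\tr (P t *m S)| ^+ 2 <= (a * n%:R ^+ 2 + 1) / (n%:R * (n%:R + 1)).
Proof.
move=> n2 [Ppsd Psum Pa Pb /andP[alo ahi]] dS.
have SH : adjmx S = S by case: dS => -[].
have PH : forall u, adjmx (P u) = P u by move=> u; case: (Ppsd u).
set N : C := n%:R.
have N0 : N != 0 by rewrite pnatr_eq0 -lt0n (leq_trans _ n2).
have Npos : 0 < N by rewrite ltr0n (leq_trans _ n2).
have N21 : N ^+ 2 - 1 != 0.
  rewrite subr_eq0 -natrX pnatr_eq1 -mulnn; apply/negP => /eqP; nia.
have N1 : 1 < N by rewrite ltr1n.
have N2pos : 0 < N ^+ 2 - 1 by rewrite subr_gt0 exprn_egt1.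
have N3pos : 0 < N ^+ 3 by rewrite exprn_gt0.
have apos : 0 < a by apply: lt_trans alo; rewrite divr_gt0.
have areal : a \is Num.real by apply: gtr0_real.
have Kpos : 0 < a * N ^+ 3 - 1 by rewrite subr_gt0 -ltr_pdivrMr.
have K0 : a * N ^+ 3 - 1 != 0 by rewrite lt0r_neq0.
have N20 : N ^+ 2 - 1 != 0 by rewrite lt0r_neq0.
have Np10 : N + 1 != 0 by rewrite lt0r_neq0 // addr_gt0.
set b := (1 - N * a) / (N * (N ^+ 2 - 1)).
set D := a - b.
have HD : D = (a * N ^+ 3 - 1) / (N * (N ^+ 2 - 1)).
  by rewrite /D /b; field; sidec.
have Dpos : 0 < D by rewrite HD divr_gt0 // mulr_gt0.
have D0 : D != 0 by rewrite lt0r_neq0.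
have breal : b \is Num.real.
  by rewrite /b !(rpredM, rpredV, rpredB, rpredX, rpred1, rpred_nat, areal).
have Dreal : D \is Num.real by rewrite rpredB.
set p := fun t => \tr (P t *m S).
have preal : forall t, p t \is Num.real by move=> t; apply: tr_herm_real.
have sump : \sum_t p t = 1.
  by rewrite /p -raddf_sum /= -mulmx_suml Psum mul1mx; case: dS.
set c := fun t => (p t - b * N) / D.
have creal : forall t, c t \is Num.real.
  move=> t; rewrite /c !(rpredM, rpredV, rpredB, rpred_nat, rpred1, preal, breal, Dreal) //.
have sumc : \sum_t c t = N.
  rewrite /c -mulr_suml sumrB sump sumr_const card_ord -mulr_natr natrX -/N HD /b.
  field; sidec.
set Q := \sum_u c u *: P u.
have trPQ : forall t, \tr (P t *m Q) = p t.
  move=> t; rewrite /Q mulmx_sumr raddf_sum /=.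
  under eq_bigr do rewrite -scalemxAr mxtraceZ.
  rewrite (bigD1 t) //= Pa.
  under eq_bigr => u ut do rewrite Pb 1?eq_sym // -/b.
  rewrite -mulr_suml.
  have -> : \sum_(u | u != t) c u = N - c t by rewrite -sumc [in RHS](bigD1 t) //= addrC addrK.
  by rewrite /c /D; field; sidec.
set T := \sum_t c t * p t.
have trQQ : \tr (Q *m Q) = T.
  rewrite {1}/Q mulmx_suml raddf_sum /=; apply: eq_bigr => u _.
  by rewrite -scalemxAl mxtraceZ trPQ.
have trQS : \tr (Q *m S) = T.
  rewrite {1}/Q mulmx_suml raddf_sum /=; apply: eq_bigr => u _.
  by rewrite -scalemxAl mxtraceZ.
have trSQ : \tr (S *m Q) = T by rewrite mxtrace_mulC.
have Tle : T <= 1.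
  have := tr_sq_ge0 _ (adjmx_comb S P c SH PH creal).
  rewrite -/Q mulmxBl !mulmxBr !raddfB /= trQQ trQS trSQ => h.
  apply: le_trans (tr_sq_le1 _ dS); rewrite -subr_ge0.
  by move: h; rewrite subrr addr0.
have TE : T = (\sum_t p t ^+ 2 - b * N) / D.
  rewrite /T (eq_bigr (fun t => p t ^+ 2 / D - (b * N / D) * p t)); last first.
    by move=> t _; rewrite /c; field.
  by rewrite sumrB -mulr_suml -mulr_sumr sump mulr1 mulrBl.
have -> : \sum_t `|\tr (P t *m S)| ^+ 2 = \sum_t p t ^+ 2.
  by apply: eq_bigr => t _; exact: real_normK (preal t).
have : \sum_t p t ^+ 2 - b * N <= D.
  by rewrite -[D]mul1r -ler_pdivrMr // -TE.
rewrite lerBlDr => h; apply: (le_trans h).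
suff -> : D + b * N = (a * N ^+ 2 + 1) / (N * (N + 1)) by [].
by rewrite /D /b; field; sidec.
Qed.

Lemma x_bound (P : 'I_(n ^ 2) -> 'M[C]_n) (a : C) (S : 'M[C]_n) t :
  (2 <= n)%N -> gen_SIC_POVM P a -> density S -> `|\tr (P t *m S)| <= 1.
Proof.
move=> n2 HP dS; have := sic_bound _ _ _ n2 HP dS.
case: (HP) => _ _ _ _ /andP[_ ahi].
set N : C := n%:R => h.
have Npos : 0 < N by rewrite ltr0n (leq_trans _ n2).
rewrite -(expr_le1 (n := 2)) //; apply: le_trans (le_trans (_ : _ <= _) h) _.
  by rewrite (bigD1 t) //= lerDl sumr_ge0 // => u _; rewrite exprn_ge0.
rewrite ler_pdivrMr ?mul1r ?mulr_gt0 ?addr_gt0 //.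
have h1 : a * N ^+ 2 <= 1 by rewrite -ler_pdivlMr ?exprn_gt0.
apply: le_trans (lerD h1 (lexx 1)) _.
by rewrite /N natr1 -natrM -[1 + 1]/(2%:R) ler_nat; nia.
Qed.

Lemma bound_pos (a : C) : (2 <= n)%N -> 0 < a ->
  0 < (a * n%:R ^+ 2 + 1) / (n%:R * (n%:R + 1)).
Proof.
move=> n2 apos; have Npos : 0 < n%:R :> C by rewrite ltr0n (leq_trans _ n2).
have h : 0 < a * n%:R ^+ 2 by rewrite mulr_gt0 ?exprn_gt0.
by rewrite divr_gt0 ?mulr_gt0 ?addr_gt0 ?ltr01.
Qed.

End Single.

Lemma cs_sqrt (C : numClosedFieldType) (I : finType) (u v : I -> C) (A B : C) :
  (forall i, 0 <= u i) -> (forall i, 0 <= v i) -> 0 < A -> 0 < B ->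
  \sum_i u i ^+ 2 <= A -> \sum_i v i ^+ 2 <= B ->
  \sum_i u i * v i <= sqrtC A * sqrtC B.
Proof.
move=> u0 v0 Apos Bpos hA hB.
set s := sqrtC A; set t := sqrtC B.
have s0 : 0 < s by rewrite sqrtC_gt0.
have t0 : 0 < t by rewrite sqrtC_gt0.
have sA : s ^+ 2 = A by rewrite sqrtCK.
have tB : t ^+ 2 = B by rewrite sqrtCK.
have st0 : 0 < 2 * s * t by rewrite !mulr_gt0.
rewrite -(ler_pM2l st0).
have h1 : forall i, 2 * s * t * (u i * v i) <= t ^+ 2 * u i ^+ 2 + s ^+ 2 * v i ^+ 2.
  move=> i; rewrite -subr_ge0.
  have r : t * u i - s * v i \is Num.real.
    by rewrite rpredB ?rpredM ?ger0_real ?u0 ?v0 ?ltW.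
  have := exprn_ge0 2 (normr_ge0 (t * u i - s * v i)); rewrite real_normK //.
  suff -> : (t * u i - s * v i) ^+ 2 = t ^+ 2 * u i ^+ 2 + s ^+ 2 * v i ^+ 2 - 2 * s * t * (u i * v i) by [].
  ring.
rewrite mulr_sumr; apply: le_trans (ler_sum _ (fun i _ => h1 i)) _.
rewrite big_split /= -!mulr_sumr.
apply: le_trans (lerD (ler_wpM2l (exprn_ge0 2 (ltW t0)) hA) (ler_wpM2l (exprn_ge0 2 (ltW s0)) hB)) _.
rewrite -sA -tB le_eqVlt; apply/orP; left; apply/eqP; ring.
Qed.

Lemma sub_sum (C : numClosedFieldType) (I J : finType) (f : J -> C) (g : I -> J) :
  injective g -> (forall t, 0 <= f t) -> \sum_i f (g i) <= \sum_t f t.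
Proof.
move=> ginj f0.
have -> : \sum_i f (g i) = \sum_(t in g @: setT) f t.
  rewrite big_imset /=; last by move=> x y _ _; exact: ginj.
  by apply: eq_bigl => y; rewrite inE.
by rewrite [X in _ <= X](bigID (mem (g @: setT))) /= lerDl sumr_ge0.
Qed.

Lemma sic_apos (C : numClosedFieldType) n (P : 'I_(n ^ 2) -> 'M[C]_n) a :
  (2 <= n)%N -> gen_SIC_POVM P a -> 0 < a.
Proof.
move=> n2 [_ _ _ _ /andP[alo _]]; apply: lt_trans alo.
by rewrite divr_gt0 ?exprn_gt0 // ltr0n (leq_trans _ n2).
Qed.

Arguments sic_apos {C n P a}.
Arguments bound_pos {C n a}.
Arguments sic_bound {C n P a S}.
Arguments x_bound {C n P a S}.

Theorem theorem4 (C : numClosedFieldType) (m : nat) (d : 'I_m -> nat)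
  (P : forall i : 'I_m, 'I_(d i ^ 2) -> 'M[C]_(d i)) (a : 'I_m -> C)
  (rho : 'M[C]_#|tidx d|) :
  (2 <= m)%N ->
  (forall i, 2 <= d i)%N ->
  density rho ->
  (forall i, gen_SIC_POVM (P i) (a i)) ->
  fully_separable rho ->
  forall sigma : forall i : 'I_m, 'I_(dmin d) -> 'I_(d i ^ 2),
    (forall i, injective (sigma i)) ->
    forall i k : 'I_m, i != k ->
      \sum_(j < dmin d) \tr (tensmx (fun l => P l (sigma l j)) *m rho)
      <= sqrtC ((a i * (d i)%:R ^+ 2 + 1) / ((d i)%:R * ((d i)%:R + 1)))
         * sqrtC ((a k * (d k)%:R ^+ 2 + 1) / ((d k)%:R * ((d k)%:R + 1))).
Proof.
move=> m2 d2 drho HP [K [w [s [w0 sw sd ->]]]] sigma sinj i k ik.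
set Bi := (a i * _ + 1) / _; set Bk := (a k * _ + 1) / _.
set x := fun (q : 'I_K) l t => \tr (P l t *m s q l).
have E : \sum_(j < dmin d) \tr (tensmx (fun l => P l (sigma l j)) *m \sum_q w q *: tensmx (s q))
   = \sum_q w q * \sum_(j < dmin d) \prod_l x q l (sigma l j).
  rewrite (eq_bigr (fun j => \sum_q w q * \prod_l x q l (sigma l j))); last first.
    move=> j _; rewrite mulmx_sumr raddf_sum /=; apply: eq_bigr => q _.
    by rewrite -scalemxAr mxtraceZ tens_tr.
  by rewrite exchange_big; apply: eq_bigr => q _; rewrite mulr_sumr.
rewrite E; apply: le_trans (_ : _ <= \sum_q w q * (sqrtC Bi * sqrtC Bk)) _; last first.
  by rewrite -mulr_suml sw mul1r.
apply: ler_sum => q _; apply: (ler_wpM2l (w0 q)).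
have PH : forall l t, adjmx (P l t) = P l t by move=> l t; case: (HP l) => /(_ t) [].
have SH : forall l, adjmx (s q l) = s q l by move=> l; case: (sd q l) => -[].
have xr : forall l t, x q l t \is Num.real by move=> l t; apply: tr_herm_real.
have x1 : forall l t, `|x q l t| <= 1 by move=> l t; apply: x_bound (d2 l) (HP l) (sd q l).
apply: le_trans (_ : _ <= \sum_j `|x q i (sigma i j)| * `|x q k (sigma k j)|) _.
  apply: ler_sum => j _.
  apply: le_trans (real_ler_norm (rpred_prod _ (fun l _ => xr l (sigma l j)))) _.
  rewrite normr_prod (bigD1 i) //= (bigD1 k) /=; last by rewrite eq_sym.
  rewrite mulrA -[X in _ <= X]mulr1; apply: ler_wpM2l; first by rewrite mulr_ge0.
  by apply: prodr_ile1 => l _; rewrite normr_ge0 x1.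
apply: cs_sqrt => //.
- exact: bound_pos (d2 i) (sic_apos (d2 i) (HP i)).
- exact: bound_pos (d2 k) (sic_apos (d2 k) (HP k)).
- have h := @sub_sum _ _ _ (fun t => `|x q i t| ^+ 2) _ (sinj i) (fun t => exprn_ge0 2 (normr_ge0 _)).
  exact: le_trans h (sic_bound (d2 i) (HP i) (sd q i)).
- have h := @sub_sum _ _ _ (fun t => `|x q k t| ^+ 2) _ (sinj k) (fun t => exprn_ge0 2 (normr_ge0 _)).
  exact: le_trans h (sic_bound (d2 k) (HP k) (sd q k)).
Qed.
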